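(* Let $(M,g)$ be a Riemannian manifold of dimension $n$, and let $N\ge1$ (with $2N\le n$ if $n$ is even). Then the operator-valued polynomial $$\pi_{2N}(\lambda)=\sum_{k=1}^N \mathcal{C}_{2N}^{(k)}\frac{1}{(N-k)!}\left(\lambda+\frac n2-N\right)^{N-k}$$ satisfies $$\pi_{2N}\!\left(-\frac n2+2N-j\right)=(-1)^jP_{2j}\,\pi_{2N-2j}\!\left(-\frac n2+2N-j\right),\quad j=1,\dots,N-1,$$ and $$\pi_{2N}\!\left(-\frac n2+N\right)=(-1)^{N-1}P_{2N}.$$
   Context: $P_{2N}$ denote the GJMS-operators of $(M,g)$ (conformally covariant operators $\Delta^N+$ lower order terms, $-\Delta\ge0$). A composition $I=(I_1,\dots,I_r)$ is an ordered sequence of integers $I_j\ge1$ with size $|I|=\sum I_j$; $P_{2I}=P_{2I_1}\circ\cdots\circ P_{2I_r}$. Multiplicities: $m_I^{(1)}=m_I=-(-1)^r|I|!(|I|-1)!\prod_{j=1}^r\frac{1}{I_j!(I_j-1)!}\prod_{j=1}^{r-1}\frac{1}{I_j+I_{j+1}}$ (empty products $=1$). The Stirling numbers of the first kind $s(n,k)$ are defined by $\sum_{k=0}^n s(n,k)x^k=x(x-1)\cdots(x-n+1)$. For $k\ge2$: if $a\ge1$, $J$ a non-empty composition, $a+|J|=N$ and $2\le k\le N-1$, $$m^{(k)}_{(a,J)}=\frac{\sum_{j=0}^{k-1}s(N,N-j)|J|^{k-1-j}}{(N-1)\cdots(N-k+1)}\,m^{(1)}_{(a,J)},$$ and for $2\le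 k\le N$, $m^{(k)}_{(N)}=\frac{s(N,N-k+1)}{(N-1)\cdots(N-k+1)}m^{(1)}_{(N)}$. Define $\mathcal{C}^{(k)}_{2N}=\sum_{|I|=N}m_I^{(k)}P_{2I}$ for $1\le k\le N-1$ and $\mathcal{C}^{(N)}_{2N}=(-1)^{N-1}P_{2N}$. The polynomials $\pi_{2M}$ for $M<N$ are defined by the same formula with $N$ replaced by $M$. *)

(* Defs.v *)
From HB Require Import structures.
From mathcomp Require Import all_boot all_order all_algebra.
Set Implicit Arguments. Unset Strict Implicit. Unset Printing Implicit Defensive.
Import Order.TTheory GRing.Theory Num.Theory.
Local Open Scope ring_scope.

(* Enumerated by choosing the first part i in 1..n and recursing on n - i
   (the fuel argument only guarantees structural termination; fuel n suffices). *)
Fixpoint comps_fuel (f n : nat) : seq (seq nat) :=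
  match f with
  | 0 => if n == 0%N then [:: [::]] else [::]
  | f'.+1 =>
      if n == 0%N then [:: [::]]
      else flatten [seq [seq i :: c | c <- comps_fuel f' (n - i)] | i <- iota 1 n]
  end.
Definition compositions (n : nat) : seq (seq nat) := comps_fuel n n.

Definition stirling1 (n k : nat) : int :=
  (\prod_(i < n) ('X - (i%:Z)%:P) : {poly int})`_k.

Section Mult.
Variable R : numFieldType.

Definition mult1 (I : seq nat) : R :=
  - (-1) ^+ size I * ((sumn I)`! * (sumn I).-1`!)%:R
  * \prod_(i <- I) ((i`! * i.-1`!)%:R)^-1
  * (match I with
     | [::] => 1
     | a :: J => \prod_(x <- pairmap addn a J) (x%:R)^-1
     end).

Definition fall (N k : nat) : R := \prod_(1 <= i < k) ((N - i)%:R).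

Definition multk (k : nat) (I : seq nat) : R :=
  if k == 1%N then mult1 I else
  match I with
  | [::] => 0
  | [:: a] => (stirling1 a (a - k + 1))%:~R / fall a k * mult1 I
  | a :: J =>
      let N := sumn I in
      (\sum_(j < k) (stirling1 N (N - j))%:~R * ((sumn J)%:R) ^+ (k.-1 - j))
        / fall N k * mult1 I
  end.
End Mult.

Section Ops.
Variables (R : numFieldType) (A : algType R) (P : nat -> A).
(* P N stands for the GJMS operator P_{2N}; P_{2I} = P_{2I_1} o ... o P_{2I_r} *)
Definition PI (I : seq nat) : A := \prod_(i <- I) P i.

Definition Cop (k N : nat) : A :=
  if k == N then (-1) ^+ N.-1 *: P N
  else \sum_(I <- compositions N) multk R k I *: PI I.

Definition pi_op (n N : nat) (lam : R) : A :=
  \sum_(1 <= k < N.+1)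
    (((N - k)`!)%:R^-1 * (lam + n%:R / 2 - N%:R) ^+ (N - k)) *: Cop k N.
End Ops.

(* Main.v *)
Require Import Defs.
From HB Require Import structures.
From mathcomp Require Import all_boot all_order all_algebra.
From mathcomp Require Import zify ring lra.
Set Implicit Arguments. Unset Strict Implicit. Unset Printing Implicit Defensive.
Import Order.TTheory GRing.Theory Num.Theory.
Local Open Scope ring_scope.
Lemma comps_fuel_eq f1 f2 n : (n <= f1)%N -> (n <= f2)%N -> comps_fuel f1 n = comps_fuel f2 n.
Proof.
elim: f1 f2 n => [|f1 IH] [|f2] n /=.
- by [].
- by rewrite leqn0 => /eqP -> .
- by rewrite leqn0 => _ /eqP -> .
case: eqP => // /eqP n0 h1 h2; congr flatten; apply/eq_in_map => i.
rewrite mem_iota => /andP [i1 i2]; rewrite (IH f2) //; lia.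
Qed.

Lemma compositionsE n : (0 < n)%N -> compositions n =
  flatten [seq [seq i :: c | c <- compositions (n - i)] | i <- iota 1 n].
Proof.
case: n => // n _; rewrite {1}/compositions.
have -> : comps_fuel n.+1 n.+1 = flatten [seq [seq i :: c | c <- comps_fuel n (n.+1 - i)] | i <- iota 1 n.+1] by [].
congr flatten; apply/eq_in_map => i.
rewrite mem_iota => /andP [i1 i2]; rewrite /compositions (@comps_fuel_eq n (n.+1 - i)%N) //; lia.
Qed.

Lemma compositions0 : compositions 0 = [:: [::]].
Proof. by []. Qed.

Lemma mem_comps f n c : c \in comps_fuel f n -> sumn c = n /\ all (fun i => 0 < i)%N c.
Proof.
elim: f n c => [|f IH] n c /=.
  by case: eqP => // -> ; rewrite inE => /eqP ->.
case: eqP => [-> | _]; first by rewrite inE => /eqP ->.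
case/flattenP => s /mapP [i]; rewrite mem_iota => /andP [i1 i2] -> /mapP [c' /IH [h1 h2] ->] /=.
split; [lia| by rewrite h2 andbT].
Qed.

Lemma mem_compositions n c : c \in compositions n -> sumn c = n /\ all (fun i => 0 < i)%N c.
Proof. exact: mem_comps. Qed.
Lemma stir_eval (S : comNzRingType) (N : nat) (x : S) :
  \sum_(i < N.+1) (stirling1 N i)%:~R * x ^+ i = \prod_(i < N) (x - i%:R).
Proof.
set p := (\prod_(i < N) ('X - (i%:Z)%:P) : {poly int}).
have hq : (map_poly intr p : {poly S}) = \prod_(i < N) ('X - ((i%:Z)%:~R)%:P).
  by rewrite /p map_prod_XsubC.
have hs : (size (map_poly intr p : {poly S}) <= N.+1)%N.
  by rewrite hq -big_enum size_prod_XsubC size_enum_ord.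
have -> : \sum_(i < N.+1) (stirling1 N i)%:~R * x ^+ i = (map_poly intr p : {poly S}).[x].
  by rewrite (horner_coef_wide x hs); apply: eq_bigr => i _; rewrite coef_map.
rewrite hq horner_prod; apply: eq_bigr => i _.
by rewrite hornerXsubC.
Qed.

Lemma stirNN N : stirling1 N N = 1.
Proof.
rewrite /stirling1.
set p := (\prod_(i < N) ('X - (i%:Z)%:P) : {poly int}).
have hm : p \is monic by apply: monic_prod_XsubC.
have hsz : size p = N.+1 by rewrite /p -big_enum size_prod_XsubC size_enum_ord.
by have := monicP hm; rewrite lead_coefE hsz.
Qed.
Lemma telescope (S : comNzRingType) (N : nat) (d : nat -> S) (y B : S) :
  (y - B) * \sum_(1 <= k < N.+1) (\sum_(j < k) d j * B ^+ (k.-1 - j)) * y ^+ (N - k)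
  = \sum_(j < N) d j * (y ^+ (N - j) - B ^+ (N - j)).
Proof.
elim: N => [|N IH]; first by rewrite big_geq // big_ord0 mulr0.
rewrite big_nat_recr //= subnn expr0 mulr1.
have -> : \sum_(1 <= k < N.+1) (\sum_(j < k) d j * B ^+ (k.-1 - j)) * y ^+ (N.+1 - k)
   = (\sum_(1 <= k < N.+1) (\sum_(j < k) d j * B ^+ (k.-1 - j)) * y ^+ (N - k)) * y.
  rewrite mulr_suml; apply: eq_big_nat => k /andP [k1 k2].
  by rewrite subSn // exprSr mulrA.
rewrite mulrDr mulrA IH.
rewrite [in LHS]big_ord_recr [in RHS]big_ord_recr /= subnn subSnn expr0 expr1 mulr1.
rewrite mulrDr addrA; congr (_ + _); last by rewrite mulrC.
rewrite mulr_suml mulr_sumr -big_split /=; apply: eq_bigr => j _.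
rewrite subSn; last by apply: ltnW.
rewrite !exprS; ring.
Qed.
Lemma sum_rev (S : nmodType) N (f : nat -> S) :
  \sum_(j < N) f (N - j)%N + f 0%N = \sum_(i < N.+1) f i.
Proof.
rewrite big_ord_recl addrC; congr (_ + _).
rewrite -(big_mkord xpredT (fun j => f (N - j)%N)) big_nat_rev big_mkord.
apply: eq_bigr => i _ /=; congr f; rewrite /bump /=; case: i => i /= hi; lia.
Qed.

Lemma Tclosed (R : numFieldType) N b (x : R) : (b < N)%N ->
  \sum_(1 <= k < N.+1) (\sum_(j < k) (stirling1 N (N - j))%:~R * (b%:R) ^+ (k.-1 - j)) * x ^+ (N - k)
  = \prod_(i < N | (i : nat) != b) (x - i%:R).
Proof.
move=> hb.
set Tp : {poly R} := \sum_(1 <= k < N.+1) (\sum_(j < k) (stirling1 N (N - j))%:~R * (b%:R) ^+ (k.-1 - j)) * 'X ^+ (N - k).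
have evT : Tp.[x] = \sum_(1 <= k < N.+1) (\sum_(j < k) (stirling1 N (N - j))%:~R * (b%:R) ^+ (k.-1 - j)) * x ^+ (N - k).
  rewrite /Tp horner_sum; apply: eq_bigr => k _.
  rewrite hornerM horner_exp hornerX horner_sum; congr (_ * _); apply: eq_bigr => j _.
  by rewrite hornerM horner_int horner_exp -polyC_natr hornerC.
have key : ('X - (b%:R)%:P) * Tp = \prod_(i < N) ('X - (i%:R)%:P).
  rewrite polyC_natr (@telescope _ _ (fun j => (stirling1 N (N - j))%:~R)).
  under eq_bigr do rewrite mulrBr.
  rewrite sumrB.
  have h1 : forall z : {poly R}, \sum_(j < N) (stirling1 N (N - j))%:~R * z ^+ (N - j)
     = \prod_(i < N) (z - i%:R) - (stirling1 N 0)%:~R.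
    move=> z; rewrite -stir_eval -(sum_rev N (fun i => (stirling1 N i)%:~R * z ^+ i)) /=.
    by rewrite expr0 mulr1 addrK.
  rewrite !h1 [X in _ - (X - _)](bigD1 (Ordinal hb)) //= subrr mul0r sub0r opprK addrNK.
  by apply: eq_bigr => i _; rewrite polyC_natr.
have hT : Tp = \prod_(i < N | (i : nat) != b) ('X - (i%:R)%:P).
  apply: (mulfI (negbT (polyXsubC_eq0 (b%:R : R)))); rewrite key (bigD1 (Ordinal hb)) //=.
rewrite -evT hT horner_prod; apply: eq_bigr => i _; by rewrite hornerXsubC.
Qed.
Lemma fallE (R : numFieldType) N k : (1 <= k <= N)%N ->
  ((N - k)`!)%:R * fall R N k = (N.-1)`!%:R.
Proof.
case/andP; elim: k => [//|k IH] _ hk.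
case: k IH hk => [|k] IH hk.
  by rewrite /fall big_geq // mulr1 subn1.
rewrite /fall big_nat_recr //= -/(fall R N k.+1) -(IH isT (ltnW hk)).
rewrite mulrCA [RHS]mulrC -natrM; congr (_ * _); congr (_%:R).
have -> : (N - k.+1 = (N - k.+2).+1)%N by lia.
by rewrite factS mulnC.
Qed.

Lemma prod_sub_nat (R : numFieldType) n m : (m <= n)%N ->
  \prod_(i < m) (n%:R - i%:R : R) = (n ^_ m)%:R.
Proof.
move=> hmn; rewrite ffact_prod natr_prod; apply: eq_bigr => i _.
rewrite natrB //; exact: ltnW (leq_trans (ltn_ord i) hmn).
Qed.
Lemma prod_shift (R : numFieldType) M d :
  \prod_(i < M + d.+1 | (i : nat) != M) (M%:R - i%:R : R) = (-1) ^+ d * (M`! * d`!)%:R.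
Proof.
elim: d => [|d IH].
  rewrite big_mkcond addn1 big_ord_recr /= eqxx mulr1 expr0 mul1r muln1.
  rewrite -ffactnn -prod_sub_nat //; apply: eq_bigr => i _.
  by rewrite ltn_eqF.
rewrite big_mkcond addnS big_ord_recr /= -big_mkcond IH.
have -> : (M + d.+1 != M) by lia.
rewrite natrD factS !natrM exprS; ring.
Qed.
Definition Gk (R : numFieldType) (N b k : nat) : R :=
  \sum_(j < k) (stirling1 N (N - j))%:~R * (b%:R) ^+ (k.-1 - j).

Lemma multk_eq (R : numFieldType) a J k : (1 <= k <= a + sumn J)%N ->
  multk R k (a :: J) = Gk R (a + sumn J) (sumn J) k / fall R (a + sumn J) k * mult1 R (a :: J).
Proof.
case/andP => hk1 hk2; rewrite /multk /Gk.
have [-> | k1] := eqVneq k 1%N.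
  by rewrite /= big_ord1 subn0 stirNN /fall big_geq // divr1 mul1r /= expr0 mul1r.

case: J hk2 => [|y J] hk2 //=.
move: hk2; rewrite /= !addn0 => hk2.
case: k hk1 hk2 k1 => [//|k] _ hk2 k1.
rewrite big_ord_recr /= subnn expr0 mulr1 big1 ?add0r; last first.
  by move=> i _; rewrite expr0n /=; case: eqP => [h|]; [ have := ltn_ord i; lia | rewrite mulr0].
by have -> : (a - k.+1 + 1 = a - k)%N by lia.
Qed.
Lemma fact_neq0 (R : numFieldType) n : (n`!)%:R != 0 :> R.
Proof. by rewrite pnatr_eq0 -lt0n fact_gt0. Qed.

Lemma G_at0 (R : numFieldType) N b : (b < N)%N ->
  Gk R N b N = \prod_(i < N | (i : nat) != b) (0 - i%:R).
Proof.
move=> hb; have hN : (1 <= N)%N by lia.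
rewrite -(Tclosed 0 hb) big_nat_recr //= subnn expr0 mulr1 [X in _ = X + _]big1_seq ?add0r //.
move=> k; rewrite /= mem_index_iota => /andP [_ hk].
rewrite expr0n; have -> : (N - k == 0)%N = false by lia.
by rewrite mulr0.
Qed.

Lemma GN_val (R : numFieldType) a J : (0 < a)%N -> all (fun i => 0 < i)%N J ->
  mult1 R (a :: J) / (((a + sumn J)%N.-1)`!)%:R * Gk R (a + sumn J)%N (sumn J) (a + sumn J)%N
  = (if a :: J == [:: (a + sumn J)%N] then (-1) ^+ (a + sumn J)%N.-1 else 0).
Proof.
move=> ha hJ; rewrite G_at0; last by lia.
case: J hJ => [|y J] /= hJ.
  rewrite !addn0 eqxx; case: a ha => [//|d] _.
  have := prod_shift R 0 d; rewrite add0n mulr0n => ->.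
  rewrite /mult1 big_seq1 big_nil.
  have -> : sumn [:: d.+1] = d.+1 by rewrite /= addn0.
  have -> : size [:: d.+1] = 1%N by [].
  have h1 := fact_neq0 R d; have h2 := fact_neq0 R d.+1.
  have h3 : (1 + d%:R : R) != 0 by rewrite addrC natr1 pnatr_eq0.
  rewrite !natrM mul1r expr1; field; by apply/andP; split.
have hy : (0 < y)%N by case/andP: hJ.
have hN : (0 < a + (y + sumn J))%N by lia.
rewrite (bigD1 (Ordinal hN)) /=; last by lia.
rewrite subrr mul0r mulr0.
by case: eqP => // -[].
Qed.
Definition qq (R : numFieldType) (N : nat) (x : R) (I : seq nat) : R :=
  \sum_(1 <= k < N) (((N - k)`!)%:R^-1 * x ^+ (N - k)) * multk R k I
  + (if I == [:: N] then (-1) ^+ N.-1 else 0).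

Lemma qq_closed (R : numFieldType) a J (x : R) : (0 < a)%N -> all (fun i => 0 < i)%N J ->
  qq (a + sumn J)%N x (a :: J) = mult1 R (a :: J) / ((((a + sumn J)%N).-1)`!)%:R
     * \prod_(i < (a + sumn J)%N | (i : nat) != sumn J) (x - i%:R).
Proof.
move=> ha hJ.
set N := (a + sumn J)%N; set b := sumn J; set m := mult1 R (a :: J).
have hb : (b < N)%N by rewrite /N /b; lia.
have hN : (1 <= N)%N by lia.

have hsum : \sum_(1 <= k < N) (((N - k)`!)%:R^-1 * x ^+ (N - k)) * multk R k (a :: J)
   = m / ((N.-1)`!)%:R * (\prod_(i < N | (i : nat) != b) (x - i%:R) - Gk R N b N).
  rewrite -(Tclosed x hb) big_nat_recr //= subnn expr0 mulr1 addrK mulr_sumr.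
  apply: eq_big_nat => k /andP [hk1 hk2].
  rewrite multk_eq; last by rewrite hk1 ltnW.
  have hf := fallE R (N:=N) (k:=k); rewrite hk1 ltnW // in hf.
  have hf0 : fall R N k = ((N.-1)`!)%:R / ((N - k)`!)%:R.
    by rewrite -(hf isT) [((N - k)`!)%:R * _]mulrC mulfK // fact_neq0.
  rewrite hf0 -/N -/b -/(Gk R N b k) -/m.
  move: (Gk R N b k) (x ^+ (N - k)) m (fact_neq0 R (N - k)) (fact_neq0 R N.-1) => G X M0 h1 h2.
  field.
  by rewrite !fact_neq0.
have hG := GN_val R ha hJ; rewrite -/N -/b -/m in hG.
by rewrite /qq hsum -hG mulrBr subrK.
Qed.
Lemma sum_comps (V : nmodType) N (F : seq nat -> V) : (0 < N)%N ->
  \sum_(I <- compositions N) F I = \sum_(i <- iota 1 N) \sum_(c <- compositions (N - i)) F (i :: c).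
Proof.
move=> hN; rewrite compositionsE // big_flatten /= big_map; apply: eq_bigr => i _.
by rewrite big_map.
Qed.

Lemma sum_single (R : numFieldType) (V : lmodType R) N (F : seq nat -> V) (s : R) : (0 < N)%N ->
  \sum_(I <- compositions N) (if I == [:: N] then s else 0) *: F I = s *: F [:: N].
Proof.
move=> hN; rewrite sum_comps //.
have -> : iota 1 N = iota 1 N.-1 ++ [:: N].
  by rewrite -{1}(prednK hN) -(addn1 N.-1) iotaD add1n prednK.
rewrite big_cat big_seq1 /= subnn compositions0 big_seq1 eqxx big1_seq ?add0r //.
move=> i /andP [_]; rewrite mem_iota => /andP [hi1 hi2].
apply: big1_seq => c /andP [_ /mem_compositions [hc _]].
case: eqP => [[_ hc0]|]; last by rewrite scale0r.
by move: hc; rewrite hc0 /=; lia.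
Qed.
Lemma pi_expand (R : numFieldType) (A : algType R) (P : nat -> A) n N (lam : R) : (0 < N)%N ->
  pi_op P n N lam = \sum_(I <- compositions N) qq N (lam + n%:R / 2 - N%:R) I *: PI P I.
Proof.
move=> hN; set x := lam + n%:R / 2 - N%:R.
rewrite /pi_op -/x big_nat_recr //= subnn expr0 mulr1 invr1 scale1r /Cop eqxx.
under [in RHS]eq_bigr do rewrite /qq scalerDl.
rewrite big_split /= sum_single // /PI big_seq1; congr (_ + _).
under [in RHS]eq_bigr do rewrite scaler_suml.
rewrite [in RHS](exchange_big) /=; apply: eq_big_nat => k /andP [hk1 hk2].
rewrite ifF; last by apply/eqP; lia.
rewrite scaler_sumr; apply: eq_bigr => I _.
by rewrite scalerA.
Qed.
Lemma key (R : numFieldType) d a' c' : (0 < a')%N -> all (fun i => 0 < i)%N c' ->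
  qq (d.+1 + (a' + sumn c'))%N ((a' + sumn c')%N%:R : R) (d.+1 :: a' :: c')
  = (-1) ^+ d.+1 * qq (a' + sumn c')%N ((d.+1 + (a' + sumn c'))%N%:R) (a' :: c').
Proof.
move=> ha hc.
have hall : all (fun i => 0 < i)%N (a' :: c') by rewrite /= ha hc.
rewrite (qq_closed (a:=d.+1) (J:=a'::c')) // (qq_closed (a:=a') (J:=c')) //.
have -> : sumn (a' :: c') = (a' + sumn c')%N by [].
set s := sumn c'; set M := (a' + s)%N; set N := (d.+1 + M)%N.
have hsM : (s < M)%N by rewrite /M; lia.
have hP : \prod_(i < N | (i : nat) != M) (M%:R - i%:R : R) = (-1) ^+ d * (M`! * d`!)%:R.
  by rewrite /N addnC prod_shift.
set Q := \prod_(i < M | (i : nat) != s) (N%:R - i%:R : R).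
have hQ : Q * (d.+1 + a')%:R * (d.+1)`!%:R = N`!%:R.
  have h1 : \prod_(i < M) (N%:R - i%:R : R) = Q * (d.+1 + a')%:R.
    rewrite (bigD1 (Ordinal hsM)) //= mulrC; congr (_ * _).
    by rewrite -natrB /N /M; [congr (_%:R); lia | lia].
  rewrite -h1 prod_sub_nat /N ?leq_addl // -natrM.
  by have := ffact_fact (leq_addl d.+1 M); rewrite addnK => ->.
rewrite hP /mult1.
have -> : pairmap addn d.+1 (a' :: c') = (d.+1 + a')%N :: pairmap addn a' c' by [].
have -> : size [:: d.+1, a' & c'] = (size (a' :: c')).+1 by [].
have -> : sumn [:: d.+1, a' & c'] = N by [].
have -> : sumn (a' :: c') = M by [].
rewrite big_cons [\prod_(x <- (d.+1 + a')%N :: _) _]big_cons.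
have e : (d.+1).-1 = d by [].
rewrite e exprS.
have hja : (d.+1 + a')%:R != 0 :> R by rewrite pnatr_eq0.
move: hja (fact_neq0 R N.-1) (fact_neq0 R M.-1) (fact_neq0 R d) (fact_neq0 R d.+1) hQ.
move: (N`!) (N.-1`!) (M.-1`!) (d`!) ((d.+1)`!) (M`!) => fN fN1 fM1 fd fd1 fM h1 h2 h3 h4 h5 hQ.
rewrite !natrM -hQ.
set U1 := \prod_(j <- a' :: c') _. set U2 := \prod_(j <- pairmap addn a' c') _.
set sg := (-1) ^+ size (a' :: c').
move: ((d.+1 + a')%:R : R) h1 hQ => ja h1 hQ.
rewrite [(-1) ^+ d.+1]exprS; clearbody U1 U2 sg Q.
by field; rewrite h1 h2 h3 h4 h5.
Qed.
Unset Implicit Arguments.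
Theorem theorem2p2 (R : numFieldType) (A : algType R) (P : nat -> A) (n N : nat) :
  (1 <= N)%N -> (~~ odd n -> (2 * N <= n)%N) ->
  (forall j : nat, (1 <= j <= N.-1)%N ->
     pi_op P n N (- (n%:R / 2) + (2 * N - j)%:R)
     = (-1) ^+ j *: (P j * pi_op P n (N - j) (- (n%:R / 2) + (2 * N - j)%:R)))
  /\ pi_op P n N (- (n%:R / 2) + N%:R) = (-1) ^+ N.-1 *: P N.
Proof.
move=> hN _; split; last first.
  rewrite /pi_op.
  have -> : - (n%:R / 2) + N%:R + n%:R / 2 - N%:R = 0 :> R by ring.
  rewrite big_nat_recr //= subnn expr0 mulr1 invr1 scale1r /Cop eqxx big1_seq ?add0r //.
  move=> k; rewrite /= mem_index_iota => /andP [_ hk]; rewrite expr0n; have -> : (N - k == 0)%N = false by lia.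
  by rewrite mulr0 scale0r.
move=> j /andP [hj1 hj2].
set M := (N - j)%N.
have hM : (0 < M)%N by rewrite /M; lia.
rewrite !pi_expand //.
have -> : - (n%:R / 2) + (2 * N - j)%:R + n%:R / 2 - N%:R = M%:R :> R.
  have -> : (2 * N - j = M + N)%N by rewrite /M; lia.
  by rewrite natrD; ring.
have -> : - (n%:R / 2) + (2 * N - j)%:R + n%:R / 2 - M%:R = N%:R :> R.
  have -> : (2 * N - j = M + N)%N by rewrite /M; lia.
  by rewrite natrD; ring.
rewrite sum_comps // (bigD1_seq j) /=; last by rewrite iota_uniq.
  2: by rewrite mem_iota; lia.
rewrite [X in _ + X]big1_seq ?addr0; last first.
  move=> i /andP [hij]; rewrite mem_iota => /andP [hi1 hi2].
  apply: big1_seq => c /andP [_ /mem_compositions [hc hcpos]].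
  have hNi : (i + sumn c)%N = N by rewrite hc; lia.
  have := qq_closed (M%:R : R) hi1 hcpos; rewrite hNi => ->.
  have hMN : (M < N)%N by rewrite /M; lia.
  rewrite (bigD1 (Ordinal hMN)) /=; last by rewrite hc /M; lia.
  by rewrite subrr mul0r mulr0 scale0r.
rewrite -/M mulr_sumr scaler_sumr; apply: eq_big_seq => c /mem_compositions [hc hcpos].
rewrite /PI big_cons -scalerAr scalerA; congr (_ *: _).
case: c hc hcpos => [|a' c'] hc hcpos; first by move: hM; rewrite -hc.
case/andP: hcpos => ha' hc'.
case: j hj1 hj2 @M hc hM => [//|d] _ hj2 M hc hM.
have := key R d ha' hc'.
have -> : (a' + sumn c')%N = M by [].
by have -> : (d.+1 + M)%N = N by rewrite /M; lia.
Qed.
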